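(* Let $f:[1/\sqrt2,1)\to\mathbb{R}$, $f(q)=(4q^4-5q^2+1)\mathrm{K}(q)+(-8q^4+8q^2-1)\mathrm{E}(q)$. Then there exists a unique $\hat q\in(1/\sqrt2,q_* )$ such that $f(\hat q)=0$. In addition, $f>0$ on $[1/\sqrt2,\hat q)$ and $f<0$ on $(\hat q,1)$.
   Context: For $q\in[0,1)$, $\mathrm{K}(q)=\int_0^{\pi/2}(1-q^2\sin^2\theta)^{-1/2}\,d\theta$ and $\mathrm{E}(q)=\int_0^{\pi/2}(1-q^2\sin^2\theta)^{1/2}\,d\theta$ are the complete elliptic integrals of the first and second kind. The function $q\mapsto2\mathrm{E}(q)-\mathrm{K}(q)$ is strictly decreasing on $[0,1)$ and $q_*\in(0,1)$ denotes its unique zero. *)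

(* Defs.v *)
From Stdlib Require Import Reals.
From Coquelicot Require Import Coquelicot.
Open Scope R_scope.

Definition ellK (q : R) : R :=
  RInt (fun t => / sqrt (1 - q ^ 2 * (sin t) ^ 2)) 0 (PI / 2).
Definition ellE (q : R) : R :=
  RInt (fun t => sqrt (1 - q ^ 2 * (sin t) ^ 2)) 0 (PI / 2).

Definition f_lem (q : R) : R :=
  (4 * q ^ 4 - 5 * q ^ 2 + 1) * ellK q + (- 8 * q ^ 4 + 8 * q ^ 2 - 1) * ellE q.

(* Main.v *)
Require Import Defs.
From Stdlib Require Import Reals Lra Psatz Ranalysis5.
From Coquelicot Require Import Coquelicot.
Open Scope R_scope.

Definition gE q t := sqrt (1 - q ^ 2 * (sin t) ^ 2).
Definition gK q t := / sqrt (1 - q ^ 2 * (sin t) ^ 2).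

Lemma sin_sq_le t : sin t ^ 2 <= 1.
Proof. pose proof (sin2_cos2 t). unfold Rsqr in H. nra. Qed.

Lemma base_lb q r t : Rabs q <= r -> r < 1 -> 1 - r ^ 2 <= 1 - q ^ 2 * sin t ^ 2.
Proof.
  intros H Hr. pose proof (sin_sq_le t).
  assert (0 <= sin t ^ 2) by nra.
  apply Rabs_le_between in H. nra.
Qed.

Lemma base_pos q t : Rabs q < 1 -> 0 < 1 - q ^ 2 * sin t ^ 2.
Proof.
  intros H. pose proof (base_lb q (Rabs q) t (Rle_refl _) H).
  pose proof (Rabs_pos q). nra.
Qed.

Lemma cont_gE q (t:R) : Rabs q < 1 -> continuous (gE q) t.
Proof. intros H. unfold gE. apply (ex_derive_continuous (K:=R_AbsRing) (V:=R_NormedModule)). auto_derive.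
  apply base_pos; auto. Qed.

Lemma cont_gK q (t:R) : Rabs q < 1 -> continuous (gK q) t.
Proof. intros H. unfold gK. apply (ex_derive_continuous (K:=R_AbsRing) (V:=R_NormedModule)). auto_derive.
  pose proof (base_pos q t H) as H0.
  assert (H1 : 0 < 1 + - (q * (q * 1) * (sin t * (sin t * 1)))) by (simpl in H0; lra).
  repeat split; auto. apply Rgt_not_eq, sqrt_lt_R0; auto. Qed.

Lemma exE q : Rabs q < 1 -> ex_RInt (gE q) 0 (PI/2).
Proof. intros H; apply (ex_RInt_continuous (V:=R_CompleteNormedModule)); intros; apply cont_gE; auto. Qed.
Lemma exK q : Rabs q < 1 -> ex_RInt (gK q) 0 (PI/2).
Proof. intros H; apply (ex_RInt_continuous (V:=R_CompleteNormedModule)); intros; apply cont_gK; auto. Qed.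

Lemma PI2_pos : 0 < PI / 2.
Proof. pose proof PI_RGT_0. lra. Qed.

Lemma RInt_minus_R f g a b : ex_RInt f a b -> ex_RInt g a b ->
  RInt f a b - RInt g a b = RInt (fun t => f t - g t) a b.
Proof. intros. transitivity (@minus R_AbelianGroup (RInt f a b) (RInt g a b)); [reflexivity|].
  rewrite <- (RInt_minus (V:=R_CompleteNormedModule)) by auto; reflexivity. Qed.

Lemma RInt_zero a b : RInt (fun _ => 0) a b = 0.
Proof. rewrite RInt_const. unfold scal; simpl; unfold mult; simpl. ring. Qed.

Lemma ellK_eq q : ellK q = RInt (gK q) 0 (PI/2). Proof. reflexivity. Qed.
Lemma ellE_eq q : ellE q = RInt (gE q) 0 (PI/2). Proof. reflexivity. Qed.

Lemma K_mono q1 q2 : 0 <= q1 <= q2 -> q2 < 1 -> ellK q1 <= ellK q2.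
Proof.
  intros H1 H2. rewrite !ellK_eq.
  assert (A1 : Rabs q1 < 1) by (rewrite Rabs_right; lra).
  assert (A2 : Rabs q2 < 1) by (rewrite Rabs_right; lra).
  apply RInt_le; [pose proof PI2_pos; lra | apply exK; auto | apply exK; auto |].
  intros t _. unfold gK. pose proof (base_pos q2 t A2). pose proof (sin_sq_le t).
  assert (0 <= sin t ^ 2) by nra.
  apply Rinv_le_contravar. apply sqrt_lt_R0; auto.
  apply sqrt_le_1_alt. assert (q1^2 <= q2^2) by nra.
  assert (q1^2 * sin t ^2 <= q2^2 * sin t ^2) by (apply Rmult_le_compat_r; lra). lra.
Qed.

Lemma E_mono q1 q2 : 0 <= q1 <= q2 -> q2 < 1 -> ellE q2 <= ellE q1.
Proof.
  intros H1 H2. rewrite !ellE_eq.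
  assert (A1 : Rabs q1 < 1) by (rewrite Rabs_right; lra).
  assert (A2 : Rabs q2 < 1) by (rewrite Rabs_right; lra).
  apply RInt_le; [pose proof PI2_pos; lra | apply exE; auto | apply exE; auto |].
  intros t _. unfold gE. pose proof (sin_sq_le t).
  assert (0 <= sin t ^ 2) by nra.
  apply sqrt_le_1_alt. assert (q1^2 <= q2^2) by nra.
  assert (q1^2 * sin t ^2 <= q2^2 * sin t ^2) by (apply Rmult_le_compat_r; lra). lra.
Qed.

Lemma E_pos q : Rabs q < 1 -> 0 < ellE q.
Proof.
  intros H. rewrite ellE_eq; eapply Rle_lt_trans; [right; symmetry; apply (RInt_zero 0 (PI/2))|].
  apply RInt_lt. apply PI2_pos.
  intros; apply cont_gE; auto.
  intros; apply (continuous_const (U:=R_UniformSpace) (V:=R_UniformSpace)).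
  intros t _. unfold gE. apply sqrt_lt_R0, base_pos; auto.
Qed.

Lemma K_pos q : Rabs q < 1 -> 0 < ellK q.
Proof.
  intros H. rewrite ellK_eq; eapply Rle_lt_trans; [right; symmetry; apply (RInt_zero 0 (PI/2))|].
  apply RInt_lt. apply PI2_pos.
  intros; apply cont_gK; auto.
  intros; apply (continuous_const (U:=R_UniformSpace) (V:=R_UniformSpace)).
  intros t _. unfold gK. apply Rinv_0_lt_compat, sqrt_lt_R0, base_pos; auto.
Qed.

Lemma RInt_scal_R f a b l : ex_RInt f a b -> RInt (fun t => l * f t) a b = l * RInt f a b.
Proof. intros H. apply (RInt_scal (V:=R_CompleteNormedModule)); auto. Qed.

Lemma twoEK_pos q : q ^ 2 <= 1/2 -> 0 < 2 * ellE q - ellK q.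
Proof.
  intros Hq.
  assert (A : Rabs q < 1).
  { apply Rabs_def1; nra. }
  rewrite ellE_eq, ellK_eq, <- RInt_scal_R by (apply exE; auto).
  rewrite RInt_minus_R; [| apply ex_RInt_scal with (f := gE q); apply exE; auto | apply exK; auto].
  eapply Rle_lt_trans; [right; symmetry; apply (RInt_zero 0 (PI/2))|].
  apply RInt_lt. apply PI2_pos.
  - intros t _. apply (ex_derive_continuous (K:=R_AbsRing) (V:=R_NormedModule)).
    unfold gE, gK. pose proof (base_pos q t A) as H0.
    assert (H1 : 0 < 1 + - (q * (q * 1) * (sin t * (sin t * 1)))) by (simpl in H0; lra).
    auto_derive. repeat split; auto. apply Rgt_not_eq, sqrt_lt_R0; auto.
  - intros; apply (continuous_const (U:=R_UniformSpace) (V:=R_UniformSpace)).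
  - intros t Ht. unfold gE, gK.
    assert (Hc : 0 < cos t) by (apply cos_gt_0; lra).
    pose proof (sin2_cos2 t). unfold Rsqr in H.
    pose proof (base_pos q t A) as H0.
    pose proof (sqrt_lt_R0 _ H0) as Hu.
    pose proof (sqrt_sqrt _ (Rlt_le _ _ H0)) as Hs.
    set (u := sqrt (1 - q ^ 2 * sin t ^ 2)) in *.
    assert (2 * u * u > 1) by nra.
    assert (u * / u = 1) by (field; lra).
    assert (0 < / u) by (apply Rinv_0_lt_compat; auto).
    nra.
Qed.

Lemma sqrt_diff a b c : 0 < c -> c <= a -> c <= b ->
  Rabs (sqrt a - sqrt b) * sqrt c <= Rabs (a - b).
Proof.
  intros Hc Ha Hb.
  pose proof (sqrt_le_1_alt _ _ Ha). pose proof (sqrt_le_1_alt _ _ Hb).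
  pose proof (sqrt_lt_R0 _ Hc).
  replace (a - b) with ((sqrt a - sqrt b) * (sqrt a + sqrt b)).
  2:{ transitivity (sqrt a * sqrt a - sqrt b * sqrt b); [ring | rewrite !sqrt_sqrt by lra; ring]. }
  rewrite Rabs_mult. apply Rmult_le_compat_l. apply Rabs_pos.
  rewrite Rabs_right; lra.
Qed.

Lemma inv_sqrt_diff a b c : 0 < c -> c <= a -> c <= b ->
  Rabs (/ sqrt a - / sqrt b) * (sqrt c * c) <= Rabs (a - b).
Proof.
  intros Hc Ha Hb.
  pose proof (sqrt_le_1_alt _ _ Ha). pose proof (sqrt_le_1_alt _ _ Hb).
  pose proof (sqrt_lt_R0 _ Hc).
  pose proof (sqrt_sqrt c (Rlt_le _ _ Hc)).
  assert (E : / sqrt a - / sqrt b = (sqrt b - sqrt a) * / (sqrt a * sqrt b)) by (field; lra).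
  assert (Hp : c <= sqrt a * sqrt b) by nra.
  assert (Hq : 0 < / (sqrt a * sqrt b)) by (apply Rinv_0_lt_compat; nra).
  rewrite E, Rabs_mult, (Rabs_right (/ _)) by lra.
  pose proof (sqrt_diff b a c Hc Hb Ha).
  rewrite (Rabs_minus_sym b a) in H3.
  assert (Rabs (sqrt b - sqrt a) * / (sqrt a * sqrt b) * c <= Rabs (sqrt b - sqrt a)).
  { assert (/ (sqrt a * sqrt b) * c <= 1).
    { apply Rmult_le_reg_l with (sqrt a * sqrt b). nra.
      rewrite <- Rmult_assoc, Rinv_r by nra. lra. }
    pose proof (Rabs_pos (sqrt b - sqrt a)). nra. }
  replace (Rabs (sqrt b - sqrt a) * / (sqrt a * sqrt b) * (sqrt c * c)) with
    ((Rabs (sqrt b - sqrt a) * / (sqrt a * sqrt b) * c) * sqrt c) by ring.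
  apply Rle_trans with (Rabs (sqrt b - sqrt a) * sqrt c); auto.
  apply Rmult_le_compat_r; lra.
Qed.

Lemma diff_bound q1 q2 r t : Rabs q1 <= r -> Rabs q2 <= r -> r < 1 ->
  Rabs ((1 - q1 ^ 2 * sin t ^ 2) - (1 - q2 ^ 2 * sin t ^ 2)) <= 2 * Rabs (q1 - q2).
Proof.
  intros H1 H2 Hr.
  replace ((1 - q1 ^ 2 * sin t ^ 2) - (1 - q2 ^ 2 * sin t ^ 2)) with ((q1 - q2) * (- (q1 + q2) * sin t ^ 2)) by ring.
  rewrite Rabs_mult, Rmult_comm. apply Rmult_le_compat_r. apply Rabs_pos.
  rewrite Rabs_mult, Rabs_Ropp. pose proof (sin_sq_le t).
  rewrite (Rabs_right (sin t ^ 2)) by nra.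
  pose proof (Rabs_triang q1 q2). pose proof (Rabs_pos (q1+q2)). nra.
Qed.

Lemma E_lip q1 q2 r : Rabs q1 <= r -> Rabs q2 <= r -> r < 1 ->
  Rabs (ellE q1 - ellE q2) <= (PI/2) * (2 / sqrt (1 - r^2)) * Rabs (q1 - q2).
Proof.
  intros H1 H2 Hr. pose proof (Rabs_pos q1).
  assert (A1 : Rabs q1 < 1) by lra. assert (A2 : Rabs q2 < 1) by lra.
  assert (Hc : 0 < 1 - r^2) by nra.
  pose proof (sqrt_lt_R0 _ Hc).
  rewrite !ellE_eq, RInt_minus_R by (apply exE; auto).
  replace ((PI/2) * (2 / sqrt (1 - r^2)) * Rabs (q1 - q2)) with ((PI/2 - 0) * (2 * Rabs (q1 - q2) / sqrt (1 - r^2))) by (field; lra).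
  apply abs_RInt_le_const. pose proof PI2_pos; lra.
  apply (ex_RInt_minus (V:=R_NormedModule)); apply exE; auto.
  intros t _. unfold gE.
  pose proof (sqrt_diff (1 - q1 ^ 2 * sin t ^ 2) (1 - q2 ^ 2 * sin t ^ 2) (1 - r^2) Hc (base_lb _ _ _ H1 Hr) (base_lb _ _ _ H2 Hr)).
  pose proof (diff_bound q1 q2 r t H1 H2 Hr).
  apply Rmult_le_reg_r with (sqrt (1 - r^2)); auto.
  unfold Rdiv. rewrite Rmult_assoc, Rinv_l by lra. lra.
Qed.

Lemma K_lip q1 q2 r : Rabs q1 <= r -> Rabs q2 <= r -> r < 1 ->
  Rabs (ellK q1 - ellK q2) <= (PI/2) * (2 / (sqrt (1 - r^2) * (1 - r^2))) * Rabs (q1 - q2).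
Proof.
  intros H1 H2 Hr. pose proof (Rabs_pos q1).
  assert (A1 : Rabs q1 < 1) by lra. assert (A2 : Rabs q2 < 1) by lra.
  assert (Hc : 0 < 1 - r^2) by nra.
  pose proof (sqrt_lt_R0 _ Hc).
  assert (Hd : 0 < sqrt (1 - r^2) * (1 - r^2)) by nra.
  rewrite !ellK_eq, RInt_minus_R by (apply exK; auto).
  replace ((PI/2) * (2 / (sqrt (1 - r^2) * (1 - r^2))) * Rabs (q1 - q2)) with ((PI/2 - 0) * (2 * Rabs (q1 - q2) / (sqrt (1 - r^2) * (1 - r^2)))) by (field; lra).
  apply abs_RInt_le_const. pose proof PI2_pos; lra.
  apply (ex_RInt_minus (V:=R_NormedModule)); apply exK; auto.
  intros t _. unfold gK.
  pose proof (inv_sqrt_diff (1 - q1 ^ 2 * sin t ^ 2) (1 - q2 ^ 2 * sin t ^ 2) (1 - r^2) Hc (base_lb _ _ _ H1 Hr) (base_lb _ _ _ H2 Hr)).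
  pose proof (diff_bound q1 q2 r t H1 H2 Hr).
  apply Rmult_le_reg_r with (sqrt (1 - r^2) * (1 - r^2)); auto.
  unfold Rdiv. rewrite Rmult_assoc, Rinv_l by lra. lra.
Qed.

Lemma lip_cont (F : R -> R) r L a : 0 < L -> Rabs a < r ->
  (forall x y, Rabs x <= r -> Rabs y <= r -> Rabs (F x - F y) <= L * Rabs (x - y)) ->
  continuity_pt F a.
Proof.
  intros HL Ha HF eps Heps.
  exists (Rmin (r - Rabs a) (eps / L)). split.
  { apply Rmin_pos. lra. apply Rdiv_lt_0_compat; lra. }
  intros x [_ Hx]. unfold R_dist in *. simpl in *. unfold R_dist in *.
  pose proof (Rmin_l (r - Rabs a) (eps / L)). pose proof (Rmin_r (r - Rabs a) (eps / L)).
  assert (Rabs x <= r).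
  { pose proof (Rabs_triang_inv x a). lra. }
  pose proof (HF x a H1 (Rlt_le _ _ Ha)).
  assert (L * Rabs (x - a) < L * (eps / L)) by (apply Rmult_lt_compat_l; lra).
  replace (L * (eps / L)) with eps in H3 by (field; lra). lra.
Qed.

Lemma K_cont a : Rabs a < 1 -> continuity_pt ellK a.
Proof.
  intros Ha. set (r := (1 + Rabs a) / 2).
  assert (Hr : r < 1) by (unfold r; lra). pose proof (Rabs_pos a).
  assert (Hc : 0 < 1 - r^2) by (unfold r in *; nra).
  pose proof (sqrt_lt_R0 _ Hc).
  apply lip_cont with r ((PI/2) * (2 / (sqrt (1 - r^2) * (1 - r^2)))).
  - apply Rmult_lt_0_compat. apply PI2_pos. apply Rdiv_lt_0_compat; nra.
  - unfold r; lra.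
  - intros; apply K_lip; auto.
Qed.

Lemma E_cont a : Rabs a < 1 -> continuity_pt ellE a.
Proof.
  intros Ha. set (r := (1 + Rabs a) / 2).
  assert (Hr : r < 1) by (unfold r; lra). pose proof (Rabs_pos a).
  assert (Hc : 0 < 1 - r^2) by (unfold r in *; nra).
  pose proof (sqrt_lt_R0 _ Hc).
  apply lip_cont with r ((PI/2) * (2 / sqrt (1 - r^2))).
  - apply Rmult_lt_0_compat. apply PI2_pos. apply Rdiv_lt_0_compat; nra.
  - unfold r; lra.
  - intros; apply E_lip; auto.
Qed.

Lemma poly_cont (p : R -> R) a : (forall x, ex_derive p x) -> continuity_pt p a.
Proof.
  intros H. apply continuity_pt_filterlim.
  apply (ex_derive_continuous (K:=R_AbsRing) (V:=R_NormedModule)). auto.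
Qed.

Lemma f_cont a : Rabs a < 1 -> continuity_pt f_lem a.
Proof.
  intros Ha. unfold f_lem.
  change (continuity_pt (plus_fct (mult_fct (fun q => 4 * q ^ 4 - 5 * q ^ 2 + 1) ellK)
     (mult_fct (fun q => - 8 * q ^ 4 + 8 * q ^ 2 - 1) ellE)) a).
  apply continuity_pt_plus; apply continuity_pt_mult.
  - apply poly_cont; intros; auto_derive; auto.
  - apply K_cont; auto.
  - apply poly_cont; intros; auto_derive; auto.
  - apply E_cont; auto.
Qed.

Lemma f_form q : f_lem q =
  - (-4 * (q^2)^2 + 5 * q^2 - 1) * ellK q + (-8 * (q^2)^2 + 8 * q^2 - 1) * ellE q.
Proof. unfold f_lem. ring. Qed.

Lemma inv_sqrt2_sq q : / sqrt 2 <= q -> 1/2 <= q^2 /\ 0 < q.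
Proof.
  intros H. pose proof (sqrt_lt_R0 2 ltac:(lra)). pose proof (sqrt_sqrt 2 ltac:(lra)).
  assert (0 < / sqrt 2) by (apply Rinv_0_lt_compat; auto).
  assert (1 <= q * sqrt 2).
  { apply Rmult_le_compat_r with (r := sqrt 2) in H; [|lra].
    rewrite Rinv_l in H by lra. lra. }
  split; nra.
Qed.

Lemma key q1 q2 : / sqrt 2 <= q1 -> q1 < q2 -> q2 < 1 -> f_lem q1 <= 0 -> f_lem q2 < 0.
Proof.
  intros H1 H12 H2 Hf.
  destruct (inv_sqrt2_sq q1 H1) as [Hx Hq1].
  assert (A1 : Rabs q1 < 1) by (rewrite Rabs_right; lra).
  assert (A2 : Rabs q2 < 1) by (rewrite Rabs_right; lra).
  pose proof (K_mono q1 q2 ltac:(lra) H2) as HK.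
  pose proof (E_mono q1 q2 ltac:(lra) H2) as HE.
  pose proof (E_pos q2 A2). pose proof (K_pos q1 A1).
  rewrite f_form in Hf |- *.
  set (K1 := ellK q1) in *. set (K2 := ellK q2) in *.
  set (E1 := ellE q1) in *. set (E2 := ellE q2) in *.
  assert (Hxy : q1^2 < q2^2) by nra.
  assert (Hy : q2^2 < 1) by nra.
  set (x := q1^2) in *. set (y := q2^2) in *.
  set (D1 := -4 * x^2 + 5 * x - 1). set (D2 := -4 * y^2 + 5 * y - 1).
  set (N1 := -8 * x^2 + 8 * x - 1). set (N2 := -8 * y^2 + 8 * y - 1).
  assert (HD1 : 0 < D1) by (unfold D1; nra).
  assert (HD2 : 0 < D2) by (unfold D2; nra).
  fold D1 D2 N1 N2 in Hf |- *.
  assert (0 < D2 * K2) by (apply Rmult_lt_0_compat; lra).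
  destruct (Rle_or_lt N2 0) as [HN2 | HN2].
  - assert (N2 * E2 <= 0) by nra. lra.
  - assert (HN1 : N2 < N1).
    { unfold N1, N2. assert (0 < (y - x) * (x + y - 1)) by (apply Rmult_lt_0_compat; lra). nra. }
    assert (HP : N2 * D1 < N1 * D2).
    { unfold N1, N2, D1, D2.
      assert (0 < (y - x) * (8 * ((x - 1/2) * (y - 1/2)) + 1)).
      { apply Rmult_lt_0_compat. lra. assert (0 <= (x - 1/2) * (y - 1/2)) by nra. lra. }
      nra. }
    assert (S1 : D1 * (N2 * E2) < N1 * D2 * E2) by nra.
    assert (S2 : N1 * D2 * E2 <= N1 * D2 * E1).
    { apply Rmult_le_compat_l; [|lra]. apply Rlt_le, Rmult_lt_0_compat; lra. }
    assert (S3 : N1 * E1 <= D1 * K1) by lra.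
    assert (S4 : N1 * D2 * E1 <= D1 * K1 * D2).
    { replace (N1 * D2 * E1) with ((N1 * E1) * D2) by ring. apply Rmult_le_compat_r; lra. }
    assert (S5 : D1 * K1 * D2 <= D1 * (D2 * K2)).
    { replace (D1 * K1 * D2) with ((D1 * D2) * K1) by ring.
      replace (D1 * (D2 * K2)) with ((D1 * D2) * K2) by ring.
      apply Rmult_le_compat_l; [nra|lra]. }
    assert (D1 * (N2 * E2) < D1 * (D2 * K2)) by lra.
    apply Rmult_lt_reg_l in H4; lra.
Qed.

Theorem lemma2p3 (qs : R) :
  0 < qs < 1 -> 2 * ellE qs - ellK qs = 0 ->
  exists qh : R,
    (/ sqrt 2 < qh < qs /\ f_lem qh = 0 /\
     (forall q, / sqrt 2 < q < qs -> f_lem q = 0 -> q = qh)) /\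
    (forall q, / sqrt 2 <= q < qh -> f_lem q > 0) /\
    (forall q, qh < q < 1 -> f_lem q < 0).
Proof.
  intros [Hq0 Hq1] Hqs.
  pose proof (sqrt_lt_R0 2 ltac:(lra)) as Hs. pose proof (sqrt_sqrt 2 ltac:(lra)) as Hs2.
  set (a := / sqrt 2).
  assert (Ha : 0 < a) by (apply Rinv_0_lt_compat; auto).
  assert (Ha2 : a ^ 2 = 1/2).
  { unfold a. rewrite <- Rinv_pow by lra. simpl. rewrite Rmult_1_r, Hs2. lra. }
  assert (Hlt : a < qs).
  { destruct (Rlt_or_le a qs) as [h|h]; auto.
    assert (qs ^ 2 <= 1/2) by nra.
    pose proof (twoEK_pos qs H). lra. }
  assert (Aa : Rabs a < 1) by (rewrite Rabs_right; nra).
  assert (As : Rabs qs < 1) by (rewrite Rabs_right; lra).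
  assert (Hfa : f_lem a > 0).
  { rewrite f_form, Ha2. pose proof (twoEK_pos a ltac:(lra)). lra. }
  assert (Hfs : f_lem qs < 0).
  { rewrite f_form.
    assert (ellK qs = 2 * ellE qs) by lra. rewrite H.
    pose proof (E_pos qs As).
    assert (1/2 < qs ^ 2) by nra. nra. }
  destruct (IVT_interv (fun q => - f_lem q) a qs) as [qh [[Hh1 Hh2] Hh]].
  { intros b Hb. apply continuity_pt_opp. apply f_cont. rewrite Rabs_right; lra. }
  { auto. } { lra. } { lra. }
  assert (Hfh : f_lem qh = 0) by lra.
  assert (Hh1' : a < qh) by (destruct Hh1; auto; subst; lra).
  assert (Hh2' : qh < qs) by (destruct Hh2; auto; subst; lra).
  assert (Kk : forall q1 q2, a <= q1 -> q1 < q2 -> q2 < 1 -> f_lem q1 <= 0 -> f_lem q2 < 0) by exact key.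
  exists qh. split; [split; [lra | split; [auto|]] | split].
  - intros q Hq Hfq. destruct (Rtotal_order q qh) as [h|[h|h]]; auto.
    + pose proof (Kk q qh ltac:(lra) h ltac:(lra) ltac:(lra)). lra.
    + pose proof (Kk qh q ltac:(lra) h ltac:(lra) ltac:(lra)). lra.
  - intros q Hq. destruct (Rle_or_lt (f_lem q) 0) as [h|h]; auto.
    pose proof (Kk q qh ltac:(lra) ltac:(lra) ltac:(lra) h). lra.
  - intros q Hq. apply (Kk qh q); lra.
Qed.
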